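(* Suppose that for some instance of the SEJR subfamily, Alg3 uses $O(o_3)$ arithmetic operations. Then the instance can be computed using $O(nmk+o_3)$ arithmetic operations, when dissatisfaction levels are maintained as follows: initially $\ell(c,\emptyset)=\lfloor kn_c/n\rfloor$, and after each addition to $W$, for each $c\in C\setminus W$ the stored value is decremented by 1 while it exceeds $\lfloor\frac{k}{n}|\{i: c\in A_i,\ |A_i\cap W|<\text{(stored value)}\}|\rfloor$.
   Context: Setting: voters $N=\{1,\dots,n\}$, candidates $C=\{c_1,\dots,c_m\}$, approval ballots $A_i\subseteq C$, $k\le m$ a positive integer, $N_c=\{i: c\in A_i\}$, $n_c=|N_c|$. The profile is given as an $n\times m$ 0/1 table, and the counts $|A_i\cap W|$ are stored in an array of $n$ counters updated when a candidate is added; complexity counts arithmetic operations. Dissatisfaction level: for $W\subseteq C$ with $|W|\le k$ and $c\in C\setminus W$, $\ell(c,W)$ is the largest nonnegative integer $\ell$ with $\ell=\lfloor \frac{k}{n}|\{i\in N: c\in A_i,\ |A_i\cap W|<\ell\}|\rfloor$. SEJR subfamily (parametrized by a subprocedure Alg3): start with $W=\emptyset$. While $|W|<k$ and $\max_{c\in C\setminus W}\ell(c,W)>0$, add to $W$ a candidate $c\in C\setminus W$ maximizing $\ell(c,W)$ (ties broken arbitrarily). Afterwards, if $|W|<k$, Alg3 adds candidates from $C\setminus W$ until $|W|=k$. Output $W$. *)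

(* Defs.v *)
From mathcomp Require Import all_boot.
Set Implicit Arguments. Unset Strict Implicit. Unset Printing Implicit Defensive.

(* Setting: voters 'I_n, candidates 'I_m, approval profile as an n x m 0/1   *)
(* table  A : 'I_n -> 'I_m -> bool  (A i c  <=>  c \in A_i).                 *)

Section SEJR.
Variables (n m k : nat) (A : 'I_n -> 'I_m -> bool).

Definition below_count (W : {set 'I_m}) (c : 'I_m) (l : nat) : nat :=
  #|[set i : 'I_n | A i c && (#|[set x in W | A i x]| < l)]|.

(* The dissatisfaction level l(c,W): the largest nonnegative integer l with
   l = floor (k/n * below_count W c l).  Any such l satisfies l <= k (the count
   is at most n), and l = 0 always qualifies, so the max over l < k.+1 is the
   largest solution. *)
Definition ell (W : {set 'I_m}) (c : 'I_m) : nat :=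
  \max_(l < k.+1 | val l == k * below_count W c l %/ n) val l.

Definition greedy_step (W W' : {set 'I_m}) : Prop :=
  #|W| < k /\
  exists2 c, c \notin W &
    [/\ 0 < ell W c, (forall c', c' \notin W -> ell W c' <= ell W c)
      & W' = c |: W].

Definition greedy_stopped (W : {set 'I_m}) : Prop :=
  ~ (#|W| < k /\ exists2 c, c \notin W & 0 < ell W c).

Inductive greedy_reach : {set 'I_m} -> {set 'I_m} -> Prop :=
| gr_refl W : greedy_reach W W
| gr_step W W' W'' : greedy_step W W' -> greedy_reach W' W'' -> greedy_reach W W''.

(* Alg3 : a subprocedure receiving the current committee W and returning the
   candidates it adds, together with the number of arithmetic operations it used. *)
Definition alg3_type := {set 'I_m} -> seq 'I_m * nat.

Definition sejr_output (Alg3 : alg3_type) (Wout : {set 'I_m}) : Prop :=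
  exists W0, [/\ greedy_reach set0 W0, greedy_stopped W0 &
    Wout = if #|W0| < k then W0 :|: [set x in (Alg3 W0).1] else W0].

(* Cost-instrumented implementation.  Every primitive operation (table       *)
(* lookup, counter read/update, comparison, addition, multiplication,        *)
(* division, decrement, set membership test / insertion) is charged 1.       *)
(* Functions return (result, number of operations).                          *)

(* |{ i : A i c, cW i < l }| computed by a scan over the voters;
   per voter: table lookup, counter read + comparison, addition. *)
Definition impl_count (cW : 'I_n -> nat) (c : 'I_m) (l : nat) : nat * nat :=
  foldr (fun i acc => (acc.1 + (A i c && (cW i < l)), acc.2 + 3)) (0, 0)
        (enum 'I_n).

(* does the stored value l exceed floor(k/n * |{...}|) ?
   (multiplication, division, comparison) *)
Definition impl_exceeds (cW : 'I_n -> nat) (c : 'I_m) (l : nat) : bool * nat :=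
  let: (x, cst) := impl_count cW c l in (k * x %/ n < l, cst + 3).

Fixpoint impl_decr (fuel : nat) (cW : 'I_n -> nat) (c : 'I_m) (l : nat)
  : nat * nat :=
  match fuel with
  | 0 => (l, 0)
  | f.+1 =>
      let: (b, cst) := impl_exceeds cW c l in
      if b then let: (l', cst') := impl_decr f cW c l.-1 in (l', cst + 1 + cst')
      else (l, cst)
  end.

(* initial value floor(k n_c / n): n_c by a scan (lookup, addition per voter),
   then a multiplication and a division. *)
Definition impl_init_level (c : 'I_m) : nat * nat :=
  let: (nc, cst) := foldr (fun i acc => (acc.1 + A i c, acc.2 + 2)) (0, 0)
                            (enum 'I_n) in
  (k * nc %/ n, cst + 2).

Record state := State {
  stW : {set 'I_m};
  stsz : nat;
  stcW : 'I_n -> nat;        (* counters |A_i \cap W| *)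
  stlv : 'I_m -> nat }.      (* stored dissatisfaction levels *)

Definition impl_init : state * nat :=
  let lvc := fun c => impl_init_level c in
  (State set0 0 (fun _ => 0) (fun c => (lvc c).1),
   \sum_(c < m) (lvc c).2 + n).

(* find a candidate not in W with maximal stored value (the first one in
   index order); per candidate: membership test and comparison. *)
Definition impl_best (st : state) : option ('I_m * nat) * nat :=
  foldl (fun acc c =>
           let: (best, cst) := acc in
           if c \in stW st then (best, cst + 1) else
           match best with
           | None => (Some (c, stlv st c), cst + 2)
           | Some (_, v) => if v < stlv st c then (Some (c, stlv st c), cst + 2)
                            else (best, cst + 2)
           end) (None, 0) (enum 'I_m).

(* add c to W: insertion, size increment, counter updates
   (lookup + addition per voter), then update every stored value. *)
Definition impl_add (st : state) (c : 'I_m) : state * nat :=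
  let W' := c |: stW st in
  let cW' := fun i => stcW st i + A i c in
  let upd := fun c' => if c' \in W' then (stlv st c', 1)
                       else let: (l, cst) := impl_decr k.+1 cW' c' (stlv st c') in
                            (l, cst + 1) in
  (State W' (stsz st).+1 cW' (fun c' => (upd c').1),
   2 + 2 * n + \sum_(c' < m) (upd c').2).

Fixpoint impl_loop (fuel : nat) (st : state) : state * nat :=
  match fuel with
  | 0 => (st, 0)
  | f.+1 =>
      if stsz st < k then
        let: (ob, cb) := impl_best st in
        match ob with
        | Some (c, v) =>
            if 0 < v then
              let: (st', ca) := impl_add st c in
              let: (st'', cr) := impl_loop f st' in
              (st'', 1 + cb + 1 + ca + cr)
            else (st, 1 + cb + 1)
        | None => (st, 1 + cb)
        end
      else (st, 1)
  end.

(* Full implementation: returns (output, total operations, operations of Alg3). *)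
Definition impl_sejr (Alg3 : alg3_type) : {set 'I_m} * nat * nat :=
  let: (st0, c0) := impl_init in
  let: (st, cl) := impl_loop k st0 in
  if stsz st < k then
    let: (s, c3) := Alg3 (stW st) in
    (stW st :|: [set x in s], c0 + cl + 1 + c3, c3)
  else (stW st, c0 + cl + 1, 0).

End SEJR.

(* Main.v *)
Require Import Defs.
From mathcomp Require Import all_boot.
From mathcomp Require Import zify.
Set Implicit Arguments. Unset Strict Implicit. Unset Printing Implicit Defensive.

Require Import Defs.
From mathcomp Require Import all_boot.
From mathcomp Require Import zify.
Set Implicit Arguments. Unset Strict Implicit. Unset Printing Implicit Defensive.

Lemma foldr_sum n (g : 'I_n -> nat) a (s : seq 'I_n) :
  foldr (fun i acc => (acc.1 + g i, acc.2 + a)) (0,0) s = (\sum_(i <- s) g i, a * size s).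
Proof. elim: s => [|x s IH] /=; first by rewrite big_nil muln0.
by rewrite IH big_cons /= mulnS addnC [a + _]addnC. Qed.
Lemma sum_enum n (g : 'I_n -> nat) : \sum_(i <- enum 'I_n) g i = \sum_i g i.
Proof. by rewrite big_enum. Qed.
Lemma card_sum n (P : pred 'I_n) : #|[set i | P i]| = \sum_i (P i : nat).
Proof. rewrite cardsE -sum1_card big_mkcond /=. by apply: eq_bigr => i _. Qed.

Section B.
Variables (n m : nat).

Definition best_step (st : state n m) :=
  (fun acc c =>
           let: (best, cst) := acc in
           if c \in stW st then (best, cst + 1) else
           match best with
           | None => (Some (c, stlv st c), cst + 2)
           | Some (_, v) => if v < stlv st c then (Some (c, stlv st c), cst + 2)
                            else (best, cst + 2)
           end).

Lemma impl_bestE st : impl_best st = foldl (best_step st) (None, 0) (enum 'I_m).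
Proof. by []. Qed.

Definition Inv (st : state n m) (Q : pred 'I_m) (b : option ('I_m * nat)) : Prop :=
  match b with
  | None => forall x, Q x -> x \in stW st
  | Some (c, v) => [/\ v = stlv st c, c \notin stW st &
                      forall x, Q x -> x \notin stW st -> stlv st x <= v]
  end.

Lemma Inv_mono st (Q Q' : pred 'I_m) b : (forall x, Q' x -> Q x) -> Inv st Q b -> Inv st Q' b.
Proof.
move=> hQ; case: b => [[c v]|] /=.
  by case=> h1 h2 h3; split=> // x /hQ; apply: h3.
by move=> h x /hQ /h.
Qed.

Lemma step_spec st (Q : pred 'I_m) b c0 x : Inv st Q b ->
  Inv st (fun y => Q y || (y == x)) (best_step st (b, c0) x).1 /\
  (best_step st (b, c0) x).2 <= c0 + 2.
Proof.
rewrite /best_step; case: ifP => xW.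
  split; last by rewrite leq_add2l.
  case: b H => [[c v]|] /=.
    case=> h1 h2 h3; split=> // y /orP[/h3 //|/eqP ->]; by rewrite xW.
  by move=> h y /orP[/h //|/eqP ->].
case: b => [[c v]|] /=.
  case=> h1 h2 h3; case: ifP => hv /=; split=> //.
  - split=> //; first by rewrite xW.
    move=> y /orP[hy yW|/eqP -> _ //]; exact: leq_trans (h3 y hy yW) (ltnW hv).
  - split=> // y /orP[hy yW|/eqP -> _]; first exact: h3.
    by rewrite leqNgt hv.
move=> h; split=> //; split=> //; first by rewrite xW.
by move=> y /orP[/h ->|/eqP -> _].
Qed.

Lemma fold_spec st (s : seq 'I_m) : forall (Q : pred 'I_m) b c0, Inv st Q b ->
  Inv st (fun y => Q y || (y \in s)) (foldl (best_step st) (b, c0) s).1 /\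
  (foldl (best_step st) (b, c0) s).2 <= c0 + 2 * size s.
Proof.
elim: s => [|x s IH] Q b c0 h.
  split; last by rewrite addn0.
  eapply Inv_mono; last exact h. by move=> y /= /orP[].
have [h1 h2] := step_spec c0 x h.
have -> : foldl (best_step st) (b, c0) (x :: s) = foldl (best_step st) (best_step st (b, c0) x) s by [].
case E : (best_step st (b, c0) x) h1 h2 => [b1 c1] /= h1 h2.
have [h3 h4] := IH _ b1 c1 h1; split.
  eapply Inv_mono; last exact h3.
  move=> y /=; rewrite in_cons; case/orP=> [->//|/orP[->|->]];
  by rewrite ?orbT.
apply: leq_trans h4 _; lia.
Qed.

Lemma best_spec st :
  Inv st predT (impl_best st).1 /\ (impl_best st).2 <= 2 * m.
Proof.
rewrite impl_bestE; have := @fold_spec st (enum 'I_m) pred0 None 0.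
case=> // h1 h2; split; last by rewrite size_enum_ord in h2.
by apply: Inv_mono h1 => y _; rewrite mem_enum.
Qed.
End B.

Section L.
Variables (n m k : nat) (A : 'I_n -> 'I_m -> bool).
Hypothesis npos : 0 < n.

Definition cnt (W : {set 'I_m}) (i : 'I_n) := #|[set x in W | A i x]|.
Definition fl W c l := k * below_count A W c l %/ n.

Lemma bc_le_n (W : {set 'I_m}) (c : 'I_m) l : below_count A W c l <= n.
Proof. by rewrite /below_count -[X in _ <= X]card_ord max_card. Qed.

Lemma fl_le_k (W : {set 'I_m}) (c : 'I_m) l : fl W c l <= k.
Proof.
rewrite /fl -[X in _ <= X](mulnK k npos) leq_div2r //.
by rewrite leq_mul2l bc_le_n orbT.
Qed.

Lemma bc_mono_l (W : {set 'I_m}) (c : 'I_m) l l' : l <= l' -> below_count A W c l <= below_count A W c l'.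
Proof.
move=> ll; apply: subset_leq_card; apply/subsetP => i; rewrite !inE.
by case/andP=> -> h; exact: leq_trans h ll.
Qed.

Lemma fl_mono (W : {set 'I_m}) (c : 'I_m) l l' : l <= l' -> fl W c l <= fl W c l'.
Proof. by move=> ll; rewrite /fl leq_div2r // leq_mul2l bc_mono_l ?orbT. Qed.

Lemma bc_mono_W (W W' : {set 'I_m}) (c : 'I_m) l : W \subset W' -> below_count A W' c l <= below_count A W c l.
Proof.
move=> sW; apply: subset_leq_card; apply/subsetP => i; rewrite !inE.
case/andP=> -> h /=; apply: leq_ltn_trans h; apply: subset_leq_card.
apply/subsetP => x; rewrite !inE => /andP[xW ->]; by rewrite (subsetP sW).
Qed.

Lemma ell_le_k (W : {set 'I_m}) (c : 'I_m) : ell k A W c <= k.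
Proof. by apply/bigmax_leqP => l _; rewrite -ltnS ltn_ord. Qed.

Lemma ell_fix (W : {set 'I_m}) (c : 'I_m) : ell k A W c = fl W c (ell k A W c).
Proof.
rewrite /ell.
have h0 : 0 < #|[pred l : 'I_k.+1 | val l == k * below_count A W c l %/ n]|.
  apply/card_gt0P; exists ord0; rewrite inE /=.
  suff -> : below_count A W c 0 = 0 by rewrite muln0 div0n.
  apply/eqP; rewrite cards_eq0; apply/eqP/setP => i; rewrite !inE ltn0.
  by rewrite andbF.
case: (eq_bigmax_cond val h0) => l; rewrite inE /= => /eqP hl.
move=> e; rewrite /= in e *; rewrite e.
by rewrite /fl -hl.
Qed.

Lemma fix_le_ell (W : {set 'I_m}) (c : 'I_m) l : l <= k -> l = fl W c l -> l <= ell k A W c.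
Proof.
move=> lk hl; have lo : l < k.+1 by [].
have := @leq_bigmax_cond _ (fun l0 : 'I_k.+1 => val l0 == k * below_count A W c l0 %/ n) val (Ordinal lo).
by rewrite /= {1}hl eqxx => /(_ isT).
Qed.

Lemma le_fl_ell (W : {set 'I_m}) (c : 'I_m) l : l <= fl W c l -> l <= ell k A W c.
Proof.
move: {2}(k - l) (leqnn (k - l)) => d; elim: d l => [|d IH] l hd hl.
  have lk : l <= k by apply: leq_trans hl (fl_le_k _ _ _).
  apply: fix_le_ell => //; apply/eqP; rewrite eqn_leq hl.
  by apply: leq_trans (fl_le_k _ _ _) _; lia.
case: (ltngtP l (fl W c l)) => [hlt|hgt|heq].
- have fk := fl_le_k W c l.
  have h1 : k - fl W c l <= d by lia.
  have h2 : fl W c l <= fl W c (fl W c l) by apply: fl_mono.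
  exact: leq_trans (ltnW hlt) (IH _ h1 h2).
- by rewrite leqNgt hgt in hl.
- apply: fix_le_ell => //; rewrite {1}heq; exact: fl_le_k.
Qed.

Lemma gt_ell_fl (W : {set 'I_m}) (c : 'I_m) l : ell k A W c < l -> fl W c l < l.
Proof. by move=> h; rewrite ltnNge; apply/negP => /le_fl_ell; rewrite leqNgt h. Qed.

Lemma ell_mono (W W' : {set 'I_m}) (c : 'I_m) : W \subset W' -> ell k A W' c <= ell k A W c.
Proof.
move=> sW; apply: le_fl_ell; rewrite {1}ell_fix /fl leq_div2r //.
by rewrite leq_mul2l bc_mono_W ?orbT.
Qed.

Lemma ell0 (c : 'I_m) : ell k A set0 c = k * #|[set i | A i c]| %/ n.
Proof.
set v := k * _ %/ n.
have bcle l : below_count A set0 c l <= #|[set i | A i c]|.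
  by apply: subset_leq_card; apply/subsetP=> i; rewrite !inE => /andP[].
have c0 i : cnt set0 i = 0.
  by apply/eqP; rewrite cards_eq0; apply/eqP/setP => x; rewrite !inE.
apply/eqP; rewrite eqn_leq; apply/andP; split.
  rewrite ell_fix /fl leq_div2r // leq_mul2l bcle orbT //.
have vk : v <= k.
  rewrite /v -[X in _ <= X](mulnK k npos) leq_div2r // leq_mul2l.
  by rewrite -[X in _ <= X]card_ord max_card orbT.
apply: fix_le_ell => //.
case: (posnP v) => [->|vp].
  rewrite /fl; suff -> : below_count A set0 c 0 = 0 by rewrite muln0 div0n.
  apply/eqP; rewrite cards_eq0; apply/eqP/setP => i; rewrite !inE ltn0.
  by rewrite andbF.
rewrite /fl; congr (_ %/ _); congr (_ * _).
apply: eq_card => i; rewrite !inE.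
have := c0 i; rewrite /cnt => ->; by rewrite vp andbT.
Qed.

Lemma impl_countE (W : {set 'I_m}) cW (c : 'I_m) l : (forall i, cW i = cnt W i) ->
  impl_count A cW c l = (below_count A W c l, 3 * n).
Proof.
move=> hc; rewrite /impl_count.
have := foldr_sum (fun i => (A i c && (cW i < l) : nat)) 3 (enum 'I_n).
move=> /= ->; rewrite size_enum_ord sum_enum /below_count card_sum.
by congr (_, _); apply: eq_bigr => i _; rewrite hc.
Qed.

Lemma decrE (W : {set 'I_m}) cW (c : 'I_m) : (forall i, cW i = cnt W i) ->
  forall fuel s, ell k A W c <= s -> s - ell k A W c < fuel ->
  impl_decr k A fuel cW c s = (ell k A W c, (s - ell k A W c) * (3*n+4) + (3*n+3)).
Proof.
move=> hc; elim=> [|f IH] s h1 h2; first by [].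
rewrite /= /impl_exceeds (impl_countE _ _ hc) /=.
have -> : k * below_count A W c s %/ n = fl W c s by [].
case: (ltngtP (ell k A W c) s) => [hlt|hgt|heq].
- rewrite gt_ell_fl // IH; last 2 first.
  + by rewrite -ltnS prednK // (leq_ltn_trans _ hlt).
  + lia.
  congr (_, _); have -> : s - ell k A W c = (s.-1 - ell k A W c).+1 by lia.
  rewrite mulSn; lia.
- by rewrite leqNgt hgt in h1.
- rewrite -heq -ell_fix ltnn subnn; congr (_, _); lia.
Qed.

Lemma cnt_add (W : {set 'I_m}) (c : 'I_m) (i : 'I_n) : c \notin W -> cnt (c |: W) i = cnt W i + A i c.
Proof.
move=> cW; rewrite /cnt; case h: (A i c) => /=.
  rewrite (_ : [set x in c |: W | A i x] = c |: [set x in W | A i x]).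
    by rewrite cardsU1 inE (negbTE cW) addnC.
  by apply/setP => x; rewrite !inE; case: eqP => // ->; rewrite h.
rewrite addn0; apply: eq_card => x; rewrite !inE.
by case: (x =P c) => [->|]; rewrite ?h ?andbF //= (negbTE cW).
Qed.

Definition good (st : state n m) :=
  [/\ stsz st = #|stW st|, forall i, stcW st i = cnt (stW st) i,
      forall c, c \notin stW st -> stlv st c = ell k A (stW st) c &
      greedy_reach k A set0 (stW st)].

Definition Phi (st : state n m) := \sum_(c < m) (if c \in stW st then 0 else stlv st c).
Definition P := 3 * n + 4.

Definition updf (st : state n m) (c c' : 'I_m) :=
  if c' \in c |: stW st then (stlv st c', 1)
  else let: (l, cst) := impl_decr k A k.+1 (fun i => stcW st i + A i c) c' (stlv st c') in (l, cst + 1).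

Lemma impl_add_eq st c : impl_add k A st c =
  (State (c |: stW st) (stsz st).+1 (fun i => stcW st i + A i c) (fun c' => (updf st c c').1),
   2 + 2 * n + \sum_(c' < m) (updf st c c').2).
Proof. by []. Qed.

Lemma add_spec st c : good st -> c \notin stW st ->
  let st' := (impl_add k A st c).1 in
  [/\ stW st' = c |: stW st, stsz st' = (stsz st).+1,
      forall i, stcW st' i = cnt (stW st') i,
      forall c', c' \notin stW st' -> stlv st' c' = ell k A (stW st') c' &
      (impl_add k A st c).2 + P * Phi st' <= 2 + 2 * n + m * P + P * Phi st].
Proof.
case=> hsz hc hl hr cW; rewrite impl_add_eq /=.
set W := stW st.
have hc' i : stcW st i + A i c = cnt (c |: W) i by rewrite cnt_add // hc.
have hd c' : c' \notin c |: W -> updf st c c'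
   = (ell k A (c |: W) c', (ell k A W c' - ell k A (c |: W) c') * (3*n+4) + (3*n+3) + 1).
  move=> hc'W; have c'W : c' \notin W by move: hc'W; rewrite !inE negb_or => /andP[].
  rewrite /updf -/W (negbTE hc'W) hl // (decrE hc') //.
    by apply: ell_mono; apply: subsetUr.
  have := ell_le_k (stW st) c'; lia.
split=> //.
- move=> c' hc'W; by rewrite hd.
rewrite /Phi /=.
rewrite -!addnA !leq_add2l -/W !big_distrr /= -big_split /=.
have -> : m * P + \sum_(i < m) P * (if i \in W then 0 else stlv st i) =
   \sum_(i < m) (P + P * (if i \in W then 0 else stlv st i)).
  by rewrite big_split /= sum_nat_const card_ord.
apply: leq_sum => c' _.
case: ifP => hc'W.
  rewrite /updf -/W hc'W muln0 addn0 /P /=; case: ifP => _; lia.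
rewrite hd ?hc'W //=.
have c'W : c' \notin W by apply/negP => h; move: hc'W; rewrite inE h orbT.
rewrite (negbTE c'W) hl //.
have : ell k A (c |: W) c' <= ell k A W c' by apply: ell_mono; apply: subsetUr.
rewrite /P -/W; move: (ell k A (c |: W) c') (ell k A W c') => e s les; rewrite -(subnK les) addnK; nia.
Qed.

Lemma reach_snoc W1 W2 W3 : greedy_reach k A W1 W2 -> greedy_step k A W2 W3 -> greedy_reach k A W1 W3.
Proof.
elim=> [W|W W' W'' hs hr IH] h.
  exact: gr_step h (gr_refl _ _ _).
exact: gr_step hs (IH h).
Qed.

Lemma loopS f st : impl_loop k A f.+1 st =
      if stsz st < k then
        let: (ob, cb) := impl_best st in
        match ob with
        | Some (c, v) =>
            if 0 < v then
              let: (st', ca) := impl_add k A st c in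
              let: (st'', cr) := impl_loop k A f st' in
              (st'', 1 + cb + 1 + ca + cr)
            else (st, 1 + cb + 1)
        | None => (st, 1 + cb)
        end
      else (st, 1).
Proof. by []. Qed.

Definition K := 4 + 2 * m + 2 * n + m * P.

Lemma loop_some f st c v cb : stsz st < k -> impl_best st = (Some (c, v), cb) -> 0 < v ->
  impl_loop k A f.+1 st = ((impl_loop k A f (impl_add k A st c).1).1,
     1 + cb + 1 + (impl_add k A st c).2 + (impl_loop k A f (impl_add k A st c).1).2).
Proof.
move=> h1 h2 h3; rewrite loopS h1 h2 h3.
case: (impl_add k A st c) => st' ca /=; by case: (impl_loop k A f st').
Qed.

Lemma loop_zero f st c v cb : stsz st < k -> impl_best st = (Some (c, v), cb) -> 0 = v ->
  impl_loop k A f.+1 st = (st, 1 + cb + 1).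
Proof. by move=> h1 h2 h3; rewrite loopS h1 h2 -h3. Qed.

Lemma loop_none f st cb : stsz st < k -> impl_best st = (None, cb) ->
  impl_loop k A f.+1 st = (st, 1 + cb).
Proof. by move=> h1 h2; rewrite loopS h1 h2. Qed.

Lemma loop_stop f st : stsz st < k = false -> impl_loop k A f.+1 st = (st, 1).
Proof. by move=> h1; rewrite loopS h1. Qed.

Lemma loop_spec fuel : forall st, good st -> k <= stsz st + fuel ->
  [/\ good (impl_loop k A fuel st).1, greedy_stopped k A (stW (impl_loop k A fuel st).1) &
      (impl_loop k A fuel st).2 + P * Phi (impl_loop k A fuel st).1 <= fuel * K + P * Phi st].
Proof.
elim: fuel => [|f IH] st hg hk.
  split=> //=.
  case: hg => hsz _ _ _; rewrite /greedy_stopped -hsz; case; lia.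
have hstop : (forall c, c \notin stW st -> stlv st c = 0) -> greedy_stopped k A (stW st).
  case: hg => _ _ hl _ h0 [_ [c cW]]; by rewrite -hl // h0.
case hsz: (stsz st < k); last first.
  rewrite loop_stop //; split=> //=; first by case: hg => h1 _ _ _; rewrite /greedy_stopped -h1 hsz; case.
  rewrite /K; lia.
have [hI hc] := best_spec st.
destruct (impl_best st) as [ob cb] eqn:E; simpl in hI, hc.
case: ob E hI => [[c v]|] E hI; last first.
  rewrite (loop_none _ hsz E); split=> //=; first by apply: hstop => c cW; move: (hI c isT); rewrite (negbTE cW).
  rewrite /K; lia.
case: hI => hv cW hmax.
case: (posnP v) => vpos.
  rewrite (loop_zero _ hsz E (esym vpos)); split=> //=.
    apply: hstop => c' c'W; have := hmax c' isT c'W; rewrite vpos; lia.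
  rewrite /K; lia.
rewrite (loop_some _ hsz E vpos).
have [h1 h2 h3 h4 h5] := add_spec hg cW.
move: h1 h2 h3 h4 h5; set st' := (impl_add k A st c).1; set ca := (impl_add k A st c).2 => h1 h2 h3 h4 h5.
have hg' : good st'.
  case: hg => g1 g2 g3 g4; split=> //; first by rewrite h2 h1 cardsU1 cW g1.
  rewrite h1; apply: reach_snoc g4 _; split; first by rewrite -g1.
  exists c => //; split => //; first by rewrite -g3 // -hv.
  by move=> c' c'W; rewrite -!g3 // -hv; apply: hmax.
have [i1 i2 i3] := IH st' hg' ltac:(rewrite h2; lia).
move: i1 i2 i3; set st'' := (impl_loop k A f st').1; set cr := (impl_loop k A f st').2 => i1 i2 i3.
split=> //=; rewrite mulSn /K in i3 *; lia.
Qed.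

Lemma init_levelE c : impl_init_level k A c = (k * #|[set i | A i c]| %/ n, 2*n + 2).
Proof.
rewrite /impl_init_level.
have := foldr_sum (fun i => (A i c : nat)) 2 (enum 'I_n).
move=> /= ->; rewrite size_enum_ord sum_enum card_sum mulnC //.
Qed.

Lemma init_good : good (impl_init k A).1.
Proof.
rewrite /impl_init /=; split=> //=.
- by rewrite cards0.
- by move=> i; apply/esym/eqP; rewrite cards_eq0; apply/eqP/setP => x; rewrite !inE.
- by move=> c _; rewrite init_levelE ell0.
- exact: gr_refl.
Qed.

Lemma init_cost : (impl_init k A).2 = m * (2*n+2) + n.
Proof.
rewrite /impl_init /=; congr (_ + _).
rewrite (eq_bigr (fun _ => 2*n+2)); first by rewrite sum_nat_const card_ord.
by move=> c _; rewrite init_levelE.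
Qed.

Lemma Phi_le st : good st -> Phi st <= m * k.
Proof.
case=> _ _ hl _; rewrite /Phi -[m in m * k]card_ord -sum_nat_const.
apply: leq_sum => c _; case: ifP => // h; rewrite hl ?h //; exact: ell_le_k.
Qed.
End L.

Theorem mainTheorem11 :
  exists C : nat,
  forall (n m k : nat) (A : 'I_n -> 'I_m -> bool) (Alg3 : alg3_type m),
    0 < n -> 0 < k -> k <= m ->
    let: (Wout, ops, ops3) := impl_sejr k A Alg3 in
    sejr_output k A Alg3 Wout /\ ops <= C * (n * m * k) + ops3.
Proof.
exists 30 => n m k A Alg3 np kp km.
have g0 := init_good k A np.
have c0E := init_cost k A.
have p0 := Phi_le g0.
have [g1 s1 b1] := loop_spec np (fuel := k) g0 ltac:(lia).
rewrite /impl_sejr.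
move: g0 c0E p0 g1 s1 b1; case: (impl_init k A) => st0 c0 /= g0 c0E p0.
case: (impl_loop k A k st0) => st cl /= g1 s1 b1.
have hc : c0 + cl + 1 <= 30 * (n * m * k).
  rewrite c0E; move: b1; rewrite /K /P.
  have : Phi st0 * (3 * n + 4) <= m * k * (3 * n + 4) by rewrite leq_mul2r p0 orbT.
  nia.
case: g1 => hsz _ _ hr.
case: ifP => hk.
  case E3: (Alg3 (stW st)) => [s c3]; split; last lia.
  exists (stW st); split=> //; by rewrite -hsz hk E3.
split; last lia.
exists (stW st); split=> //; by rewrite -hsz hk.
Qed.
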